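(* Let $X$ be a nonnegative random variable with density $\pi(x)$ on $[0,\infty)$, and let $\delta>0$. Define the density $\pi'(x)=C(\delta x+1)^{-1/2}\pi(x)$ on $[0,\infty)$, where $C>0$ is the normalizing constant. If $\pi$ is heavy-tailed, then $\pi'$ is also heavy-tailed.
   Context: A density $f$ on $[0,\infty)$ is heavy-tailed if $\int_0^{\infty}f(x)e^{tx}\,dx=\infty$ for all $t>0$. *)

(* Defs.v *)
From HB Require Import structures.
From mathcomp Require Import all_boot all_order all_algebra.
From mathcomp Require Import all_classical all_reals all_analysis.
Set Implicit Arguments. Unset Strict Implicit. Unset Printing Implicit Defensive.
Import Order.TTheory GRing.Theory Num.Theory.
Import numFieldNormedType.Exports.
Local Open Scope classical_set_scope.
Local Open Scope ring_scope.
Local Open Scope ereal_scope.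

Definition is_density (R : realType) (f : R -> R) : Prop :=
  [/\ forall x : R, (0 <= x)%R -> (0 <= f x)%R,
      measurable_fun (`[0%R, +oo[%classic : set R) f &
      \int[@lebesgue_measure R]_(x in (`[0%R, +oo[%classic : set R)) (f x)%:E = 1].

Definition heavy_tailed (R : realType) (f : R -> R) : Prop :=
  forall t : R, (0 < t)%R ->
    \int[@lebesgue_measure R]_(x in (`[0%R, +oo[%classic : set R)) (f x * expR (t * x))%:E = +oo.

(* Main.v *)
Require Import Defs.
From HB Require Import structures.
From mathcomp Require Import all_boot all_order all_algebra.
From mathcomp Require Import all_classical all_reals all_analysis.
From mathcomp Require Import ring lra.
Import Order.TTheory GRing.Theory Num.Theory.
Import measurable_realfun.
Local Open Scope ring_scope.

Lemma pw_bound (R : realType) (delta t C p x : R) :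
  0 < delta -> 0 < t -> 0 < C -> 0 <= p -> 0 <= x ->
  C / (1 + 2 * delta / t) * p * expR (t / 2 * x) <=
  C * (Num.sqrt (delta * x + 1))^-1 * p * expR (t * x).
Proof.
move=> d0 t0 C0 p0 x0.
set M := 1 + 2 * delta / t.
set E := expR (t / 2 * x).
set s := Num.sqrt (delta * x + 1).
have k0 : 0 < 2 * delta / t by apply: divr_gt0 => //; apply: mulr_gt0.
have M0 : 0 < M by rewrite /M; lra.
have E0 : 0 < E by exact: expR_gt0.
have a1 : 1 <= delta * x + 1 by rewrite lerDr; apply: mulr_ge0 => //; exact: ltW.
have s1 : 1 <= s by rewrite /s -{1}sqrtr1 ler_sqrt //; lra.
have s0 : 0 < s by lra.
have sa : s <= delta * x + 1.
  have -> : delta * x + 1 = Num.sqrt ((delta * x + 1) ^+ 2).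
    by rewrite sqrtr_sqr ger0_norm //; lra.
  rewrite /s ler_sqrt; last by apply: exprn_ge0; lra.
  rewrite expr2 -{1}(mulr1 (delta * x + 1)) ler_wpM2l //; lra.
have E1 : 1 + t / 2 * x <= E by exact: expR_ge1Dx.
have aM : delta * x + 1 <= M * (1 + t / 2 * x).
  rewrite /M mulrDl mul1r mulrDr mulr1.
  have -> : 2 * delta / t * (t / 2 * x) = delta * x.
    by field; rewrite gt_eqF.
  have : 0 <= t / 2 * x by apply: mulr_ge0 => //; apply: divr_ge0 => //; exact: ltW.
  lra.
have sME : s <= M * E.
  apply: (le_trans sa); apply: (le_trans aM); rewrite ler_wpM2l //; exact: ltW.
have -> : expR (t * x) = E * E by rewrite /E -expRD; congr expR; field.
have -> : C / M * p * E = (C * p * E) * M^-1 by ring.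
have -> : C * s^-1 * p * (E * E) = (C * p * E) * (E / s).
  by ring.
apply: ler_wpM2l.
  by rewrite mulr_ge0 // ?mulr_ge0 // ltW.
rewrite ler_pdivlMr // ler_pdivrMl //; by rewrite mulrC.
Qed.

Theorem lemma2 (R : realType) (pi : R -> R) (delta C : R) :
  is_density pi -> 0 < delta -> 0 < C ->
  is_density (fun x => C * (Num.sqrt (delta * x + 1))^-1 * pi x) ->
  heavy_tailed pi ->
  heavy_tailed (fun x => C * (Num.sqrt (delta * x + 1))^-1 * pi x).
Proof.
move=> [pi0 mpi _] d0 C0 [_ mpi' _] H t t0.
have t20 : 0 < t / 2 by apply: divr_gt0.
have {}H := H _ t20.
set M := 1 + 2 * delta / t.
have k0 : 0 < 2 * delta / t by apply: divr_gt0 => //; apply: mulr_gt0.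
have M0 : 0 < M by rewrite /M; lra.
have mD : measurable (`[0%R, +oo[%classic : set R) by [].
have mexp (c : R) : measurable_fun (`[0%R, +oo[%classic : set R) (fun x => expR (c * x)).
  apply: measurable_funTS.
  apply: (measurableT_comp (@measurable_expR R)).
  exact: measurable_funM.
apply/eqP; rewrite -leye_eq.
apply: (@le_trans _ _ (\int[@lebesgue_measure R]_(x in (`[0%R, +oo[%classic : set R))
   ((C / M)%:E * (pi x * expR (t / 2 * x))%:E))%E).
  rewrite ge0_integralZl_EFin //.
  - by rewrite H gt0_muley // lte_fin; apply: divr_gt0.
  - move=> x /= Hx; rewrite lee_fin; apply: mulr_ge0; last exact: ltW (expR_gt0 _).
    apply: pi0; move: Hx; rewrite /= in_itv /= andbT //.
  - by apply/measurable_EFinP; apply: measurable_funM => //; exact: mexp.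
  - by apply: divr_ge0; exact: ltW.
apply: ge0_le_integral => //.
- move=> x /= Hx; rewrite -EFinM lee_fin; apply: mulr_ge0; first by apply: divr_ge0; exact: ltW.
  apply: mulr_ge0; last exact: ltW (expR_gt0 _).
  apply: pi0; move: Hx; rewrite /= in_itv /= andbT //.
- apply: emeasurable_funM; first exact: measurable_cst.
  by apply/measurable_EFinP; apply: measurable_funM => //; exact: mexp.
- by apply/measurable_EFinP; apply: measurable_funM => //; exact: mexp.
- move=> x /= Hx; rewrite -EFinM lee_fin mulrA.
  have x0 : 0 <= x by move: Hx; rewrite /= in_itv /= andbT.
  exact: (@pw_bound R delta t C (pi x) x d0 t0 C0 (pi0 x x0) x0).
Qed.
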